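(* Let $n\ge r\ge2$ be integers and $H$ a noncomplete graph with $\gamma(H)=1$. Then $\gamma_{(1,0,0)}^s(K_n\circ H)=2$, $\gamma_{(1,0,0)}^s(K_{1,n-1}\circ H)=2$, and $\gamma_{(1,0,0)}^s(K_{n,r}\circ H)=3$ if $r=2$ and $=4$ otherwise.
   Context: All graphs are finite and simple; $\gamma(H)$ is the domination number; $K_n$ is the complete graph and $K_{a,b}$ the complete bipartite graph. For a graph $G$, a function $f:V(G)\to\{0,1,2\}$ is a $(1,0,0)$-dominating function if every vertex $v$ with $f(v)=0$ satisfies $\sum_{u\in N(v)}f(u)\ge1$ ($N(v)$ the open neighbourhood). For adjacent $v,u$ with $f(v)=0$, $f(u)>0$, $f_{u\to v}$ is defined by $f_{u\to v}(v)=1$, $f_{u\to v}(u)=f(u)-1$, $f_{u\to v}(x)=f(x)$ otherwise. $f$ is secure if for every $v$ with $f(v)=0$ there is $u\in N(v)$ with $f(u)>0$ such that $f_{u\to v}$ is $(1,0,0)$-dominating. $\gamma_{(1,0,0)}^s(G)$ is the minimum of $\sum_v f(v)$ over secure $(1,0,0)$-dominating functions. The lexicographic product $G\circ H$ has vertex set $V(G)\times V(H)$, with $(u,v)(x,y)$ an edge iff $ux\in E(G)$, or $u=x$ and $vy\in E(H)$. *)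

(* Defs.v *)
From mathcomp Require Import all_boot.
Set Implicit Arguments. Unset Strict Implicit. Unset Printing Implicit Defensive.

Definition simple_graph (V : finType) (e : rel V) : Prop := symmetric e /\ irreflexive e.

Section Dom.
Variables (V : finType) (e : rel V).

Definition nbhd (v : V) : {set V} := [set u | e v u].

Definition dominating (D : {set V}) : bool :=
  [forall v, (v \in D) || [exists u in D, e v u]].
Definition domination_number : nat :=
  \big[minn/#|V|]_(D : {set V} | dominating D) #|D|.

Definition fval (f : {ffun V -> 'I_3}) (x : V) : nat := nat_of_ord (f x).
Definition weight (f : {ffun V -> 'I_3}) : nat := \sum_(x : V) fval f x.

Definition dom100 (f : {ffun V -> 'I_3}) : bool :=
  [forall v, (fval f v == 0) ==> (1 <= \sum_(u in nbhd v) fval f u)].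

Definition move (f : {ffun V -> 'I_3}) (u v : V) : {ffun V -> 'I_3} :=
  [ffun x => if x == v then inord 1 else if x == u then inord (fval f u).-1 else f x].

Definition secure_dom100 (f : {ffun V -> 'I_3}) : bool :=
  dom100 f &&
  [forall v, (fval f v == 0) ==>
     [exists u, [&& e v u, 0 < fval f u & dom100 (move f u v)]]].

(* The default #|V|.*2 bounds every weight, and the constant-1 function is always
   secure (1,0,0)-dominating, so this is the genuine minimum. *)
Definition sec100_number : nat :=
  \big[minn/#|V|.*2]_(f : {ffun V -> 'I_3} | secure_dom100 f) weight f.
End Dom.

Definition lexprod (U W : finType) (eG : rel U) (eH : rel W) : rel (U * W) :=
  fun x y => eG x.1 y.1 || ((x.1 == y.1) && eH x.2 y.2).

Definition complete_graph (n : nat) : rel 'I_n := fun x y => x != y.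

Definition star_graph (n : nat) : rel 'I_n :=
  fun x y => (x != y) && ((nat_of_ord x == 0) || (nat_of_ord y == 0)).

Definition side (n r : nat) (x : 'I_n + 'I_r) : bool := if x is inl _ then true else false.
Definition complete_bipartite (n r : nat) : rel ('I_n + 'I_r) :=
  fun x y => side x != side y.

Definition noncomplete (V : finType) (e : rel V) : Prop :=
  exists u v : V, u != v /\ ~~ e u v.

(* Main.v *)
Require Import Defs.
From mathcomp Require Import all_boot zify.
Set Implicit Arguments. Unset Strict Implicit. Unset Printing Implicit Defensive.

Section Gen.
Variables (V : finType) (e : rel V).

Lemma fval_lt3 (f : {ffun V -> 'I_3}) x : fval f x < 3.
Proof. by rewrite /fval. Qed.

Lemma sum_pos (A : {pred V}) (F : V -> nat) :
  (0 < \sum_(i in A) F i) = [exists i, (i \in A) && (0 < F i)].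
Proof.
case: (boolP [exists i, (i \in A) && (0 < F i)]).
  move=> /existsP [i /andP[iA Fi]]; rewrite (bigD1 i) //=; exact: leq_trans Fi (leq_addr _ _).
move=> N; apply/negbTE; rewrite -leqNgt leqn0; apply/eqP; apply: big1 => i iA.
apply/eqP; rewrite -leqn0 leqNgt; apply/negP => Fi; move/negP: N; apply.
by apply/existsP; exists i; rewrite iA.
Qed.

Lemma dom100P (f : {ffun V -> 'I_3}) :
  dom100 e f = [forall v, (fval f v == 0) ==> [exists u, e v u && (0 < fval f u)]].
Proof.
apply/eq_forallb => v; congr (_ ==> _).
rewrite sum_pos; apply/eq_existsb => u; by rewrite in_set.
Qed.

Lemma dom100_intro (f : {ffun V -> 'I_3}) :
  (forall v, fval f v = 0 -> exists u, e v u /\ 0 < fval f u) -> dom100 e f.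
Proof.
move=> H; rewrite dom100P; apply/forallP => v; apply/implyP => /eqP /H [u [h1 h2]].
by apply/existsP; exists u; rewrite h1 h2.
Qed.

Lemma dom100_elim (f : {ffun V -> 'I_3}) v :
  dom100 e f -> fval f v = 0 -> exists u, e v u /\ 0 < fval f u.
Proof.
rewrite dom100P => /forallP /(_ v) /implyP H /eqP /H /existsP [u /andP[h1 h2]].
by exists u.
Qed.

Lemma fval_move (f : {ffun V -> 'I_3}) u v y :
  fval (move f u v) y = if y == v then 1 else if y == u then (fval f u).-1 else fval f y.
Proof.
rewrite /fval /move ffunE; case: (y == v); first by rewrite inordK.
case: (y == u) => //; rewrite inordK //.
by have := fval_lt3 f u; rewrite /fval; lia.
Qed.

Lemma secure_elim (f : {ffun V -> 'I_3}) v :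
  secure_dom100 e f -> fval f v = 0 ->
  exists u, [/\ e v u, 0 < fval f u & dom100 e (move f u v)].
Proof.
move=> /andP[_ /forallP /(_ v) /implyP H] /eqP /H /existsP [u /and3P[h1 h2 h3]].
by exists u.
Qed.

Lemma secure_intro (f : {ffun V -> 'I_3}) :
  dom100 e f ->
  (forall v, fval f v = 0 -> exists u, [/\ e v u, 0 < fval f u & dom100 e (move f u v)]) ->
  secure_dom100 e f.
Proof.
move=> D H; rewrite /secure_dom100 D /=; apply/forallP => v; apply/implyP => /eqP /H.
by move=> [u [h1 h2 h3]]; apply/existsP; exists u; rewrite h1 h2 h3.
Qed.

Lemma fval_le_weight (f : {ffun V -> 'I_3}) x : fval f x <= weight f.
Proof. by rewrite /weight (bigD1 x) //= leq_addr. Qed.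

Lemma fval2_le_weight (f : {ffun V -> 'I_3}) x y : x != y ->
  fval f x + fval f y <= weight f.
Proof.
move=> nxy; rewrite /weight (bigD1 x) //= leq_add2l (bigD1 y) /=; last by rewrite eq_sym.
by rewrite leq_addr.
Qed.

Lemma weight_le (f : {ffun V -> 'I_3}) : weight f <= #|V|.*2.
Proof.
rewrite /weight -muln2 -sum_nat_const; apply: leq_sum => x _.
by have := fval_lt3 f x; lia.
Qed.

Lemma bigmin_le (I : eqType) (r : seq I) (P : pred I) (F : I -> nat) d i0 :
  i0 \in r -> P i0 -> \big[minn/d]_(i <- r | P i) F i <= F i0.
Proof.
elim: r => //= a r IH; rewrite in_cons big_cons => /orP[/eqP <-|ir] Pi.
  by rewrite Pi geq_minl.
case: (P a); last exact: IH.
by rewrite geq_min IH ?orbT.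
Qed.

Lemma sec100_eq k (f0 : {ffun V -> 'I_3}) :
  secure_dom100 e f0 -> weight f0 = k ->
  (forall f, secure_dom100 e f -> k <= weight f) ->
  sec100_number e = k.
Proof.
move=> s0 w0 H; apply/eqP; rewrite eqn_leq; apply/andP; split.
  by rewrite -w0; apply: bigmin_le; rewrite ?mem_index_enum.
rewrite /sec100_number; apply: (big_ind (fun x => k <= x)).
- by rewrite -w0 weight_le.
- by move=> x y hx hy; rewrite leq_min hx hy.
- exact: H.
Qed.

Lemma lb2_aux (f : {ffun V -> 'I_3}) u v :
  u != v -> ~~ e v u -> secure_dom100 e f -> weight f <= 1 -> fval f u = 0 -> False.
Proof.
move=> nuv nvu S W fu.
have [x [eux fx D]] := secure_elim S fu.
have fx1 : fval f x = 1 by have := fval_le_weight f x; lia.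
have nxu : x != u by apply/eqP => exu; rewrite exu fu in fx.
have others : forall w, w != x -> fval f w = 0.
  by move=> w nwx; have := fval2_le_weight f nwx; lia.
have gv : fval (move f x u) v = 0.
  rewrite fval_move eq_sym (negbTE nuv); case: eqP => [_|/eqP nvx]; first by rewrite fx1.
  exact: others.
have [w [evw gw]] := dom100_elim D gv.
move: gw; rewrite fval_move; case: eqP => [ewu|_]; first by rewrite -ewu evw in nvu.
case: eqP => [_|/eqP nwx]; first by rewrite fx1.
by rewrite others.
Qed.

Lemma lb2 (f : {ffun V -> 'I_3}) u v :
  u != v -> ~~ e u v -> ~~ e v u -> secure_dom100 e f -> 2 <= weight f.
Proof.
move=> nuv n1 n2 S; rewrite leqNgt; apply/negP => W.
case: (posnP (fval f u)) => fu; first exact: (lb2_aux nuv n2 S).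
case: (posnP (fval f v)) => fv; first by apply: (lb2_aux _ n1 S); rewrite // eq_sym.
have := fval2_le_weight f nuv; lia.
Qed.

Definition mkf (F : V -> nat) : {ffun V -> 'I_3} := [ffun x => inord (F x)].

Lemma fval_mkf F x : F x < 3 -> fval (mkf F) x = F x.
Proof. by move=> h; rewrite /fval /mkf ffunE inordK. Qed.

Lemma weight_mkf F : (forall x, F x < 3) -> weight (mkf F) = \sum_x F x.
Proof. by move=> h; apply: eq_bigr => x _; rewrite fval_mkf. Qed.

Lemma sum_ind (x0 : V) : \sum_(x : V) (x == x0 : nat) = 1.
Proof.
rewrite (bigD1 x0) //= eqxx big1 // => x /negbTE -> //.
Qed.

Lemma univ_sec (x0 : V) : (forall y, y != x0 -> e y x0) ->
  secure_dom100 e (mkf (fun x => (x == x0) * 2)) /\ weight (mkf (fun x => (x == x0) * 2)) = 2.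
Proof.
move=> U; have lt : forall x, (x == x0) * 2 < 3 by move=> x; case: (x == x0).
split; last by rewrite weight_mkf // -big_distrl /= sum_ind.
have dom : dom100 e (mkf (fun x => (x == x0) * 2)).
  apply: dom100_intro => v; rewrite fval_mkf //; case: eqP => // /eqP nv _.
  by exists x0; rewrite U // fval_mkf // eqxx.
apply: secure_intro => // v; rewrite fval_mkf //; case: eqP => // /eqP nv _.
exists x0; split; rewrite ?U // ?fval_mkf ?eqxx //.
apply: dom100_intro => y; rewrite fval_move; case: eqP => // /eqP nyv.
case: eqP => [//|/eqP nyx0 _]; first by rewrite fval_mkf // eqxx.
exists x0; rewrite U //; split => //.
have nv' : x0 != v by rewrite eq_sym.
by rewrite fval_move (negbTE nv') eqxx fval_mkf // eqxx.
Qed.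

End Gen.

Section SumGen.
Variables (I : finType) (P : pred I) (F : I -> nat).

Lemma S0 : \sum_(i | P i) F i = 0 -> forall i, P i -> F i = 0.
Proof.
move=> /eqP; rewrite sum_nat_eq0 => /forallP H i Pi.
by have /implyP/(_ Pi)/eqP := H i.
Qed.

Lemma S1 k : \sum_(i | P i) F i < k * #|[pred i | P i]| -> exists i, P i /\ F i < k.
Proof.
move=> H; case: (boolP [exists i, P i && (F i < k)]).
  by move=> /existsP [i /andP[h1 h2]]; exists i.
move=> N; exfalso; move: H; rewrite ltnNge => /negP; apply.
rewrite mulnC -sum_nat_const; apply: leq_sum => i Pi.
rewrite leqNgt; apply/negP => h; move/negP: N; apply; apply/existsP; exists i.
move: Pi; rewrite inE => Pi. by rewrite Pi h.
Qed.

Lemma S2 : \sum_(i | P i) F i = 1 ->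
  exists i, [/\ P i, F i = 1 & forall j, P j -> j != i -> F j = 0].
Proof.
move=> H.
have [i [Pi Fi]] : exists i, P i /\ 0 < F i.
  case: (boolP [exists i, P i && (0 < F i)]).
    by move=> /existsP [i /andP[h1 h2]]; exists i.
  move=> N; exfalso; move: H; rewrite big1 // => i Pi.
  apply/eqP; rewrite -leqn0 leqNgt; apply/negP => h; move/negP: N; apply.
  by apply/existsP; exists i; rewrite Pi h.
move: H; rewrite (bigD1 i) //= => H.
have F1 : F i = 1 by lia.
exists i; split => //.
have H0 : \sum_(j | P j && (j != i)) F j = 0 by lia.
move=> j Pj nji; move/eqP: H0; rewrite sum_nat_eq0 => /forallP /(_ j); rewrite Pj nji => /eqP; apply.
Qed.
End SumGen.

Section Bip.
Variables (n r : nat) (W : finType) (eH : rel W).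
Hypothesis symH : symmetric eH.
Variables (p q : W).
Hypothesis npq : p != q.
Hypothesis pq : ~~ eH p q.

Local Notation T := ('I_n + 'I_r)%type.
Local Notation V := (T * W)%type.
Local Notation E := (lexprod (@complete_bipartite n r) eH).

Lemma Eeq (x y : V) : E x y = (side x.1 != side y.1) || ((x.1 == y.1) && eH x.2 y.2).
Proof. by []. Qed.

Lemma K0 (f : {ffun V -> 'I_3}) (c : T) (x : V) z u' :
  secure_dom100 E f -> fval f x = 1 ->
  (forall w, w != x -> (w.1 == c) || (side w.1 != side c) -> fval f w = 0) ->
  z != u' -> ~~ eH u' z -> (c, z) != x -> False.
Proof.
move=> S fx Hx nzu nuz nvx.
have fv : fval f (c, z) = 0 by apply: Hx; rewrite //= eqxx.
have [u [evu fu D]] := secure_elim S fv.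
have eux : u = x.
  apply/eqP; apply/negP => /negP nux; move: fu; rewrite Hx //.
  move: evu; rewrite Eeq /= => /orP[ns|/andP[/eqP <- _]]; [by apply/orP; right; rewrite eq_sym | by rewrite eqxx].
subst u.
have ntv : (c, u') != (c, z) by apply/negP => /eqP [] /eqP; rewrite eq_sym (negbTE nzu).
have gt : fval (move f x (c, z)) (c, u') = 0.
  rewrite fval_move (negbTE ntv); case: eqP => [_|/eqP ntx]; first by rewrite fx.
  by apply: Hx; rewrite //= eqxx.
have [w [etw gw]] := dom100_elim D gt.
move: gw; rewrite fval_move; case: eqP => [ewv|_].
  by rewrite ewv Eeq /= !eqxx /= (negbTE nuz) in etw.
case: eqP => [_|/eqP nwx]; first by rewrite fx.
rewrite Hx //.
move: etw; rewrite Eeq /= => /orP[ns|/andP[/eqP <- _]]; [by apply/orP; right; rewrite eq_sym | by rewrite eqxx].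
Qed.

Lemma K (f : {ffun V -> 'I_3}) (c : T) (x : V) :
  secure_dom100 E f -> fval f x = 1 ->
  (forall w, w != x -> (w.1 == c) || (side w.1 != side c) -> fval f w = 0) -> False.
Proof.
move=> S fx Hx.
have nqp : ~~ eH q p by rewrite symH.
case: (boolP ((c, p) == x)) => [/eqP cpx|ncpx].
  apply: (K0 S fx Hx (z := q) (u' := p)) => //; first by rewrite eq_sym.
  rewrite -cpx; apply/negP => /eqP [] /eqP; by rewrite eq_sym (negbTE npq).
exact: (K0 S fx Hx (z := p) (u' := q)).
Qed.

Definition cs (f : {ffun V -> 'I_3}) (c : T) := \sum_(w : W) fval f (c, w).

Lemma Zero (f : {ffun V -> 'I_3}) (c : T) :
  secure_dom100 E f -> (forall w, side w.1 != side c -> fval f w = 0) -> cs f c < 2 -> False.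
Proof.
move=> S Hside lt2.
have [cs0|cs1] : cs f c = 0 \/ cs f c = 1 by lia.
  have z0 := S0 cs0 (P := xpredT).
  have fv : fval f (c, p) = 0 by apply: z0.
  have [u [evu fu _]] := secure_elim S fv.
  move: evu fu; rewrite Eeq /= => /orP[/negbTE ns|/andP[/eqP cu _]].
    by rewrite Hside // eq_sym ns.
  by case: u cu => u1 u2 /= <-; rewrite z0.
move: cs1 => /S2 [x2 [_ fx Hx]].
apply: (K S fx (c := c)) => -[w1 w2] nw /orP[/eqP /= ew|ns]; last exact: Hside.
subst w1; apply: Hx => //; apply/negP => /eqP ew; move: nw; by rewrite ew eqxx.
Qed.

Lemma One (f : {ffun V -> 'I_3}) (c : T) (x : V) :
  secure_dom100 E f -> (forall w, w.1 == c -> fval f w = 0) ->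
  side x.1 != side c -> fval f x = 1 ->
  (forall w, w != x -> side w.1 == side x.1 -> fval f w = 0) -> False.
Proof.
move=> S Hc sx fx Hx; apply: (K S fx (c := c)) => w nwx /orP[/Hc //|sw].
apply: Hx => //; move: sw sx; case: (side w.1); case: (side x.1); case: (side c) => //.
Qed.

End Bip.

Section Bip2.
Variables (n r : nat) (W : finType) (eH : rel W).
Hypothesis symH : symmetric eH.
Variables (p q : W).
Hypothesis npq : p != q.
Hypothesis pq : ~~ eH p q.

Local Notation T := ('I_n + 'I_r)%type.
Local Notation V := (T * W)%type.
Local Notation E := (lexprod (@complete_bipartite n r) eH).

Definition Sb (f : {ffun V -> 'I_3}) b := \sum_(c : T | side c == b) cs f c.

Lemma wsplit (f : {ffun V -> 'I_3}) : weight f = Sb f true + Sb f false.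
Proof.
have -> : weight f = \sum_(c : T) cs f c.
  rewrite /cs pair_big /=; apply: eq_bigr => -[a b] _ //.
rewrite (bigID (fun c : T => side c == true)) /=; congr (_ + _).
by apply: eq_bigl => c; case: (side c).
Qed.

Lemma card_side b : (if b then n else r) <= #|[pred c : T | side c == b]|.
Proof.
case: b.
  rewrite -{1}(card_ord n) -(card_image (@inl_inj 'I_n 'I_r) 'I_n).
  apply: subset_leq_card; apply/subsetP => c /imageP [a _ ->]; by rewrite inE.
rewrite -{1}(card_ord r) -(card_image (@inr_inj 'I_n 'I_r) 'I_r).
apply: subset_leq_card; apply/subsetP => c /imageP [a _ ->]; by rewrite inE.
Qed.

Lemma caseZ (f : {ffun V -> 'I_3}) b :
  secure_dom100 E f -> Sb f (~~ b) = 0 -> Sb f b < 2 * #|[pred c : T | side c == b]| -> False.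
Proof.
move=> S H0 H1.
have [c [sc lt]] := S1 H1.
apply: (Zero symH npq pq S _ lt) => -[w1 w2] /= sw.
have sw' : side w1 == ~~ b by move: sw sc; case: (side w1); case: (side c); case: (b).
have := S0 H0 sw' => /S0 /(_ w2 isT); by [].
Qed.

Lemma caseO (f : {ffun V -> 'I_3}) b :
  secure_dom100 E f -> Sb f (~~ b) = 1 -> Sb f b < 1 * #|[pred c : T | side c == b]| -> False.
Proof.
move=> S H0 H1.
have [c' [sc' cs1 Hc']] := S2 H0.
have [x2 [_ fx Hx2]] := S2 cs1.
have [c [sc lt]] := S1 H1.
have csc : cs f c = 0 by lia.
apply: (One symH npq pq S (c := c) (x := (c', x2))) => //=.
- move=> -[w1 w2] /= /eqP ->; exact: (S0 csc).
- by move: sc sc'; case: (side c); case: (side c'); case: (b).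
- move=> [w1 w2] /= nw sw.
  case: (eqVneq w1 c') => [ew|nw1].
    subst w1; apply: Hx2 => //; apply/negP => /eqP ew; by rewrite ew eqxx in nw.
  have sw1 : side w1 == ~~ b by rewrite (eqP sw).
  exact: (S0 (Hc' w1 sw1 nw1)).
Qed.

Lemma bip_lb (f : {ffun V -> 'I_3}) :
  secure_dom100 E f -> 2 <= r -> r <= n -> weight f <= 3 -> (weight f <= 2 \/ 3 <= r) -> False.
Proof.
move=> S r2 rn w3 hw.
have cT := card_side true; have cF := card_side false.
move: w3 hw; rewrite wsplit => w3 hw.
case: (posnP (Sb f false)) => [z|pB].
  by apply: (caseZ (b := true) S) => //=; lia.
case: (posnP (Sb f true)) => [z|pA].
  by apply: (caseZ (b := false) S) => //=; lia.
have [o|o] : Sb f false = 1 \/ Sb f true = 1 by lia.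
  by apply: (caseO (b := true) S) => //=; lia.
by apply: (caseO (b := false) S) => //=; lia.
Qed.

End Bip2.

Lemma move_pos (V : finType) (f : {ffun V -> 'I_3}) u v y :
  y != u -> 0 < fval f y -> 0 < fval (move f u v) y.
Proof. by move=> nyu fy; rewrite fval_move (negbTE nyu); case: (y == v). Qed.

Lemma dom1_univ (W : finType) (eH : rel W) (p q : W) :
  p != q -> domination_number eH = 1 -> exists w0, forall v, v != w0 -> eH v w0.
Proof.
move=> npq.
have : domination_number eH = #|W| \/ exists D, dominating eH D /\ #|D| = domination_number eH.
  rewrite /domination_number; apply: (big_ind (fun x => x = #|W| \/ exists D, dominating eH D /\ #|D| = x)).
  - by left.
  - move=> x y hx hy; rewrite /minn; case: (x < y); [exact: hx | exact: hy].
  - by move=> D dD; right; exists D.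
move=> [-> cW|[D [dD cD]]].
  have : 1 < #|W| by apply/card_gt1P; exists p, q.
  by rewrite cW.
move=> d1; rewrite d1 in cD; move/eqP/cards1P: cD => [w0 Dw0].
exists w0 => v nv; move/forallP: dD => /(_ v); rewrite Dw0 in_set1 (negbTE nv) /=.
by move=> /existsP [u /andP[]]; rewrite in_set1 => /eqP ->.
Qed.

Section Up.
Variables (n r : nat) (W : finType) (eH : rel W) (w0 : W).
Hypothesis U : forall v, v != w0 -> eH v w0.
Variables (a0 : 'I_n) (b0 : 'I_r).

Local Notation T := ('I_n + 'I_r)%type.
Local Notation V := (T * W)%type.
Local Notation E := (lexprod (@complete_bipartite n r) eH).

Definition P0 : V := (inl a0, w0).
Definition P1 : V := (inr b0, w0).
Definition F4 (x : V) := (x == P0) * 2 + (x == P1) * 2.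

Lemma F4_lt x : F4 x < 3.
Proof. rewrite /F4; case: eqP => [->|]; case: eqP => //. Qed.

Lemma F4_P0 : F4 P0 = 2. Proof. by rewrite /F4 eqxx. Qed.
Lemma F4_P1 : F4 P1 = 2. Proof. by rewrite /F4 eqxx. Qed.

Definition opp (x : V) : V := if side x.1 then P1 else P0.

Lemma E_opp x : E x (opp x).
Proof. by rewrite /opp Eeq; case: x => -[a|b] y. Qed.

Lemma F4_opp x : fval (mkf F4) (opp x) = 2.
Proof. by rewrite /opp fval_mkf ?F4_lt //; case: (side x.1); rewrite ?F4_P0 ?F4_P1. Qed.

Lemma bip4 : secure_dom100 E (mkf F4) /\ weight (mkf F4) = 4.
Proof.
split; last first.
  rewrite weight_mkf; last exact: F4_lt.
  by rewrite /F4 big_split /= -!big_distrl /= !sum_ind.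
have dom : dom100 E (mkf F4).
  by apply: dom100_intro => v _; exists (opp v); rewrite E_opp F4_opp.
apply: secure_intro => // v fv; exists (opp v); split; rewrite ?E_opp ?F4_opp //.
apply: dom100_intro => y gy; exists (opp y); split; first exact: E_opp.
rewrite fval_move; case: (opp y == v) => //; case: (opp y == opp v) => //.
all: by rewrite F4_opp.
Qed.

End Up.

Section Up3.
Variables (n : nat) (W : finType) (eH : rel W) (w0 : W).
Hypothesis U : forall v, v != w0 -> eH v w0.
Variables (a0 : 'I_n).

Local Notation T := ('I_n + 'I_2)%type.
Local Notation V := (T * W)%type.
Local Notation E := (lexprod (@complete_bipartite n 2) eH).

Definition Q0 : V := (inl a0, w0).
Definition Q1 : V := (inr ord0, w0).
Definition Q2 : V := (inr ord_max, w0).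
Definition F3 (x : V) := (x == Q0) + (x == Q1) + (x == Q2).

Lemma F3_lt x : F3 x < 3.
Proof. rewrite /F3; case: eqP => [->|]; case: eqP => [->|]; case: eqP => //. Qed.

Lemma fv3 x : fval (mkf F3) x = F3 x.
Proof. by rewrite fval_mkf // F3_lt. Qed.

Lemma colpos (b : 'I_2) : 0 < F3 (inr b, w0).
Proof.
rewrite /F3 /Q0 /Q1 /Q2.
have : (b == ord0) || (b == ord_max) by case: b => [[|[|]]] //.
by case/orP => /eqP ->; rewrite eqxx ?addn1 ?addnS.
Qed.

Lemma F3pos0 : 0 < F3 Q0. Proof. by rewrite /F3 eqxx. Qed.
Lemma F3pos1 : 0 < F3 Q1. Proof. by rewrite /F3 eqxx addn1. Qed.
Lemma F3pos2 : 0 < F3 Q2. Proof. by rewrite /F3 eqxx addn1. Qed.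

Lemma zero_ne_w0 (y : V) : F3 y = 0 -> ~~ side y.1 -> y.2 != w0.
Proof.
case: y => -[a|b] y2 //= F0 _; apply/eqP => e0; subst y2.
by have := colpos b; rewrite F0.
Qed.

Lemma bip3 : secure_dom100 E (mkf F3) /\ weight (mkf F3) = 3.
Proof.
split; last first.
  rewrite weight_mkf; last exact: F3_lt.
  by rewrite /F3 !big_split /= !sum_ind.
have dom : dom100 E (mkf F3).
  apply: dom100_intro => v; rewrite fv3 => Fv.
  case: v Fv => -[a|b] y Fv.
    by exists Q1; rewrite fv3 F3pos1.
  exists (inr b, w0); rewrite fv3 colpos; split => //.
  by rewrite Eeq /= eqxx U // (zero_ne_w0 Fv).
apply: secure_intro => // v; rewrite fv3 => Fv.
case: v Fv => -[a|b] y Fv.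
- exists Q1; split; rewrite ?fv3 ?F3pos1 //.
  apply: dom100_intro => -[[c|c] y2] gy.
  + exists Q2; split => //; apply: move_pos; rewrite ?fv3 ?F3pos2 //.
  + exists Q0; split => //; apply: move_pos; rewrite ?fv3 ?F3pos0 //.
- have yw := zero_ne_w0 Fv isT.
  exists Q0; split; rewrite ?fv3 ?F3pos0 //.
  apply: dom100_intro => -[[c|c] y2] gy.
  + exists Q1; split => //; apply: move_pos; rewrite ?fv3 ?F3pos1 //.
  + have nQ : (inr c, w0) != (inr b, y) :> V.
      by apply/negP => /eqP [] _ e; move: yw; rewrite e eqxx.
    have y2w : y2 != w0.
      apply/negP => /eqP e; subst y2; move: gy; rewrite fval_move.
      case: eqP => // _; case: eqP => // _; rewrite fv3.
      by move=> h; have := colpos c; rewrite h.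
    exists (inr c, w0); split.
      by rewrite Eeq /= eqxx U.
    rewrite fval_move (negbTE nQ); case: eqP => // _; rewrite fv3; exact: colpos.
Qed.

End Up3.

Theorem corollary16 (n r : nat) (W : finType) (eH : rel W) :
  (2 <= r)%N -> (r <= n)%N ->
  simple_graph eH -> noncomplete eH -> domination_number eH = 1%N ->
  [/\ sec100_number (lexprod (@complete_graph n) eH) = 2%N,
      sec100_number (lexprod (@star_graph n) eH) = 2%N
    & sec100_number (lexprod (@complete_bipartite n r) eH) = (if r == 2 then 3 else 4)%N].
Proof.
move=> r2 rn [symH irrH] [p [q [npq pq]]] dom1.
have [w0 U] := dom1_univ npq dom1.
have n0 : 0 < n by lia.
have r0 : 0 < r by lia.
pose a0 := Ordinal n0.
have nqp : ~~ eH q p by rewrite symH.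
have ne : (a0, p) != (a0, q) by apply/negP => /eqP [] /eqP; rewrite (negbTE npq).
split.
- have Ux : forall y, y != (a0, w0) -> lexprod (@complete_graph n) eH y (a0, w0).
    move=> [y1 y2] ny; rewrite /lexprod /complete_graph /=.
    case: (eqVneq y1 a0) => [e|//]; subst y1; rewrite /= U //.
  have [S w] := univ_sec Ux.
  apply: sec100_eq S w _ => f Sf.
  apply: (lb2 ne _ _ Sf); by rewrite /lexprod /complete_graph /= ?eqxx /= ?(negbTE pq) ?(negbTE nqp).
- have Ux : forall y, y != (a0, w0) -> lexprod (@star_graph n) eH y (a0, w0).
    move=> [y1 y2] ny; rewrite /lexprod /star_graph /=.
    case: (eqVneq y1 a0) => [e|nya]; last by rewrite eqxx orbT.
    subst y1; rewrite /= U //.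
  have [S w] := univ_sec Ux.
  apply: sec100_eq S w _ => f Sf.
  apply: (lb2 ne _ _ Sf); by rewrite /lexprod /star_graph /= ?eqxx /= ?(negbTE pq) ?(negbTE nqp).
- case: eqP => [er|nr].
    subst r.
    have [S w] := bip3 U a0.
    apply: sec100_eq S w _ => f Sf; rewrite leqNgt; apply/negP => lt.
    by apply: (bip_lb symH npq pq Sf); first [lia | (right; lia) | (left; lia)].
  pose b0 := Ordinal r0.
  have [S w] := bip4 eH w0 a0 b0.
  apply: sec100_eq S w _ => f Sf; rewrite leqNgt; apply/negP => lt.
  by apply: (bip_lb symH npq pq Sf); first [lia | (right; lia) | (left; lia)].
Qed.
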